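(* Let $A$ and $B$ be bounded modular lattices and let $(\alpha,\beta)$ be a retractable Galois connection between $A$ and $B$ such that $\beta(0)=0$. Then: (i) $\mathrm{udim}(B)\le \mathrm{udim}(A)$. (ii) If $(\alpha,\beta)$ is essential, then $\mathrm{udim}(A)=\mathrm{udim}(B)$. (iii) If $A$ is cyclically generated, $(\alpha,\beta)$ is cyclically essential and $\beta$ is additive, then $\mathrm{udim}(A)=\mathrm{udim}(B)$.
   Context: A bounded lattice $(X,\wedge,\vee,0,1)$ has least element $0$ and greatest element $1$, $0\neq1$. A subset $Y\subseteq X\setminus\{0\}$ is join-independent if $(y_1\vee\cdots\vee y_n)\wedge x=0$ for every finite subset $\{y_1,\dots,y_n\}\subseteq Y$ and every $x\in Y\setminus\{y_1,\dots,y_n\}$. The uniform dimension $\mathrm{udim}(X)$ is the supremum of all $k$ such that $X$ has a join-independent subset with $k$ elements if this supremum is finite, and is $\infty$ otherwise (inequalities are understood in $\mathbb{N}\cup\{\infty\}$). A Galois connection between lattices $A$ and $B$ is a pair of order-preserving maps $\alpha:A\to B$, $\beta:B\to A$ with $\alpha(a)\le b$ iff $a\le\beta(b)$. For $a\le c$, $a$ is essential in $[0,c]=\{x:0\le x\le c\}$ if for every $x\le c$, $a\wedge x=0$ implies $x=0$. An element $a$ is cyclic if $[0,a]$ is a distributive lattice satisfying the ascending chain condition; $A$ is cyclically generated if every element is a join of cyclic elements. The Galois connection is essential (resp. cyclically essential) if for every $a\in A$ (resp. every cyclic $a\in A$), $a$ is essential in $[0,\beta\alpha(a)]$; it is retractable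 if for every $b\in B$, $\alpha\beta(b)$ is essential in $[0,b]$. The map $\beta$ is additive if $\beta(b\vee b')=\beta(b)\vee\beta(b')$ for all $b,b'\in B$ with $b\wedge b'=0$. *)

(* Defs.v *)
From mathcomp Require Import all_boot all_order.
Set Implicit Arguments. Unset Strict Implicit. Unset Printing Implicit Defensive.
Import Order.TTheory.
Local Open Scope order_scope.

Section Defs.
Context {d : Order.disp_t} (X : tbLatticeType d).

Definition modular_lattice : Prop :=
  forall a b c : X, a <= c -> a `|` (b `&` c) = (a `|` b) `&` c.

Definition join_independent (s : seq X) : Prop :=
  uniq s /\ (forall y, y \in s -> y != \bot) /\
  forall (t : seq X) (x : X), t != [::] -> {subset t <= s} ->
    x \in s -> x \notin t -> (\join_(y <- t) y) `&` x = \bot.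

Definition has_indep (k : nat) : Prop :=
  exists s : seq X, join_independent s /\ size s = k.

Definition essential_in (a c : X) : Prop :=
  a <= c /\ forall x : X, x <= c -> a `&` x = \bot -> x = \bot.

Definition cyclic_elt (a : X) : Prop :=
  (forall x y z : X, x <= a -> y <= a -> z <= a ->
     x `&` (y `|` z) = (x `&` y) `|` (x `&` z)) /\
  ~ (exists f : nat -> X, forall n, f n <= a /\ f n < f n.+1).

Definition cyclically_generated : Prop :=
  forall a : X, exists S : X -> Prop,
    (forall x, S x -> cyclic_elt x) /\
    (forall x, S x -> x <= a) /\
    (forall u, (forall x, S x -> x <= u) -> a <= u).
End Defs.

(* udim X <= udim Y in N u {oo}: sup of achievable sizes compared *)
Definition udim_le {d1 d2 : Order.disp_t} (X : tbLatticeType d1)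
  (Y : tbLatticeType d2) : Prop :=
  forall k, has_indep X k -> exists k', (k <= k')%N /\ has_indep Y k'.

Definition udim_eq {d1 d2 : Order.disp_t} (X : tbLatticeType d1)
  (Y : tbLatticeType d2) : Prop := udim_le X Y /\ udim_le Y X.

Section Galois.
Context {d1 d2 : Order.disp_t} {A : tbLatticeType d1} {B : tbLatticeType d2}.
Variables (alpha : A -> B) (beta : B -> A).

Definition galois_connection : Prop :=
  (forall a a' : A, a <= a' -> alpha a <= alpha a') /\
  (forall b b' : B, b <= b' -> beta b <= beta b') /\
  (forall a b, (alpha a <= b) <-> (a <= beta b)).

Definition gc_essential : Prop :=
  forall a : A, essential_in a (beta (alpha a)).

Definition gc_cyclically_essential : Prop :=
  forall a : A, cyclic_elt a -> essential_in a (beta (alpha a)).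

Definition gc_retractable : Prop :=
  forall b : B, essential_in (alpha (beta b)) b.

Definition beta_additive : Prop :=
  forall b b' : B, b `&` b' = \bot -> beta (b `|` b') = beta b `|` beta b'.
End Galois.

(* Main.v *)
Require Import Defs.
From mathcomp Require Import all_boot all_order.
From Stdlib Require Import Classical ClassicalEpsilon.
Import Order.TTheory.
Local Open Scope order_scope.

Lemma pullback (T1 T2 : eqType) (f : T1 -> T2) (s : seq T1) (t : seq T2) :
  {subset t <= map f s} -> exists t', {subset t' <= s} /\ t = map f t'.
Proof.
elim: t => [|y t IH] sub; first by exists [::].
have /mapP [a ha ->] : y \in map f s by apply: sub; rewrite inE eqxx.
have [t' [h1 h2]] : exists t', {subset t' <= s} /\ t = map f t'.
  by apply: IH => z hz; apply: sub; rewrite inE hz orbT.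
exists (a :: t'); split; last by rewrite h2.
by move=> z; rewrite inE => /orP [/eqP -> //|]; apply: h1.
Qed.

Lemma map_indep d1 d2 (X : tbLatticeType d1) (Y : tbLatticeType d2)
  (s : seq X) (f : X -> Y) : join_independent s ->
  (forall x, x \in s -> f x != \bot) ->
  (forall t x, t != [::] -> {subset t <= s} -> x \in s -> x \notin t ->
     (\join_(y <- t) f y) `&` f x = \bot) ->
  join_independent (map f s).
Proof.
move=> [us [nz ind]] fnz H.
split; [|split].
- rewrite map_inj_in_uniq // => x y xs ys fxy.
  apply/eqP; apply/negPn/negP => nxy.
  have E : (\join_(z <- [:: y]) f z) `&` f x = \bot.
    apply: H => //; last by rewrite inE.
    by move=> z; rewrite inE => /eqP ->.
  rewrite big_cons big_nil joinx0 -fxy meetxx in E.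
  by move: (fnz x xs); rewrite E eqxx.
- by move=> y /mapP [a ha ->]; apply: fnz.
- move=> t x tn sub /mapP [a ha ->] xnt.
  have [t' [h1 h2]] := @pullback _ _ f s t sub.
  rewrite h2 big_map; apply: H => //.
  + by apply: contra tn; rewrite h2 => /eqP ->.
  + by apply: contra xnt => at'; rewrite h2 map_f.
Qed.

Lemma join_ge d (X : tbLatticeType d) (T : eqType) (F : T -> X) (t : seq T) y :
  y \in t -> F y <= \join_(z <- t) F z.
Proof.
elim: t => [|z t IH] //; rewrite inE big_cons => /orP [/eqP ->|/IH h]; first exact: leUl.
exact: le_trans h (leUr _ _).
Qed.

Section GC.
Context (d1 d2 : Order.disp_t) (A : tbLatticeType d1) (B : tbLatticeType d2)
  (alpha : A -> B) (beta : B -> A) (hgc : galois_connection alpha beta).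

Lemma gc_unit a : a <= beta (alpha a).
Proof. by case: hgc => _ [_ /(_ a (alpha a))] [] /(_ (lexx _)). Qed.

Lemma gc_counit b : alpha (beta b) <= b.
Proof. by case: hgc => _ [_ /(_ (beta b) b)] [] _ /(_ (lexx _)). Qed.

Lemma alpha0 : alpha \bot = \bot.
Proof. by case: hgc => _ [_ h]; apply/eqP; rewrite -lex0 h le0x. Qed.

Lemma alphaU u v : alpha (u `|` v) = alpha u `|` alpha v.
Proof.
case: hgc => ma [mb h]; apply: le_anti; apply/andP; split.
  apply/h; rewrite leUx; apply/andP; split; apply/h; [exact: leUl|exact: leUr].
by rewrite leUx; apply/andP; split; apply: ma; rewrite ?leUl ?leUr.
Qed.

Lemma betaI u v : beta (u `&` v) = beta u `&` beta v.
Proof.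
case: hgc => ma [mb h]; apply: le_anti; apply/andP; split.
  by rewrite lexI; apply/andP; split; apply: mb; rewrite ?leIl ?leIr.
apply/h; rewrite lexI; apply/andP; split; apply/h; [exact: leIl|exact: leIr].
Qed.

Lemma alpha_join (t : seq A) : alpha (\join_(y <- t) y) = \join_(y <- t) alpha y.
Proof. elim: t => [|y t IH]; by rewrite ?big_nil ?alpha0 // !big_cons alphaU IH. Qed.

Lemma beta_join_le (t : seq B) : \join_(y <- t) beta y <= beta (\join_(y <- t) y).
Proof.
apply/joinsP_seq => y yt _; case: hgc => _ [mb _]; apply: mb.
exact: join_ge.
Qed.
End GC.

Lemma ess0 d (X : tbLatticeType d) (c : X) : essential_in \bot c -> c = \bot.
Proof. by case=> _ /(_ c (lexx _)); rewrite meet0x => /(_ erefl). Qed.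

Lemma keyK d (X : tbLatticeType d) (u u' x x' : X) : u `&` x = \bot ->
  essential_in u u' -> essential_in x x' -> u' `&` x' = \bot.
Proof.
move=> ux [uu' eu] [xx' ex].
have z0 : (u' `&` x') `&` x = \bot.
  apply: eu; first by rewrite leIx2 // leIl.
  apply/eqP; rewrite -lex0 -ux lexI leIl /=.
  by rewrite leIx2 // leIr orbT.
apply: ex; first by rewrite leIr.
by rewrite meetC.
Qed.

Lemma indep0 d (X : tbLatticeType d) (s : seq X) : join_independent s ->
  forall t x, {subset t <= s} -> x \in s -> x \notin t ->
  (\join_(y <- t) y) `&` x = \bot.
Proof.
move=> [_ [_ ind]] [|z t] x sub xs xt; first by rewrite big_nil meet0x.
exact: ind.
Qed.

Lemma claimC d (X : tbLatticeType d) (hmod : modular_lattice X) (s : seq X)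
  (f : X -> X) : join_independent s ->
  (forall x, x \in s -> essential_in x (f x)) ->
  forall t1 t2 x, {subset t1 <= s} -> {subset t2 <= s} -> x \in s ->
  x \notin t1 -> x \notin t2 -> (forall z, z \in t1 -> z \notin t2) ->
  ((\join_(y <- t1) f y) `|` \join_(y <- t2) y) `&` x = \bot.
Proof.
move=> ind ess; elim=> [|y t1 IH] t2 x s1 s2 xs xt1 xt2 dj.
  by rewrite big_nil join0x; apply: (@indep0 _ _ s ind).
have ys : y \in s by apply: s1; rewrite inE eqxx.
have s1' : {subset t1 <= s} by move=> z zt; apply: s1; rewrite inE zt orbT.
have xt1' : x \notin t1 by move: xt1; rewrite inE negb_or => /andP [].
have dj' : forall z, z \in t1 -> z \notin t2 by move=> z zt; apply: dj; rewrite inE zt orbT.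
rewrite big_cons.
case: (boolP (y \in t1)) => yt1.
  have /join_idPr -> : f y <= \join_(z <- t1) f z by apply: join_ge.
  exact: IH.
have yt2 : y \notin t2 by apply: dj; rewrite inE eqxx.
have xy : x != y by move: xt1; rewrite inE negb_or => /andP [].
set J1 := \join_(z <- t1) f z; set J2 := \join_(z <- t2) z.
rewrite -joinA; set R := J1 `|` J2.
have h1 : (y `|` R) `&` x = \bot.
  have := IH (y :: t2) x s1' _ xs xt1' _ _.
  rewrite big_cons -/J1 -/J2 joinCA; apply.
  - by move=> z; rewrite inE => /orP [/eqP -> //|]; apply: s2.
  - by rewrite inE negb_or xy.
  - by move=> z zt; rewrite inE negb_or dj' // andbT; apply: contraNneq yt1 => <-.
have h2 : (R `|` x) `&` y = \bot.
  have := IH (x :: t2) y s1' _ ys yt1 _ _.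
  rewrite big_cons -/J1 -/J2 joinCA joinC; apply.
  - by move=> z; rewrite inE => /orP [/eqP -> //|]; apply: s2.
  - by rewrite inE negb_or eq_sym xy.
  - by move=> z zt; rewrite inE negb_or dj' // andbT; apply: contraNneq xt1' => <-.
set w := (f y `|` R) `&` x.
have [yfy ey] := ess y ys.
have v0 : f y `&` (R `|` w) = \bot.
  apply: ey; first exact: leIl.
  apply/eqP; rewrite -lex0 -h2 meetC lexI leIr andbT.
  apply: le_trans (leIl _ _) _; apply: le_trans (leIr _ _) _.
  by apply: leU2 => //; exact: leIr.
have Rw : R `|` w = R.
  have := hmod R (f y) (R `|` w) (leUl _ _).
  rewrite v0 joinx0 => e; rewrite {2}e; apply/esym/meet_idPr.
  rewrite leUx leUl /=.
  by apply: le_trans (leIl _ _) _; rewrite joinC.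
have wR : w <= R by rewrite -Rw leUr.
apply/eqP; rewrite -lex0 -h1 lexI leIr andbT.
exact: le_trans wR (leUr _ _).
Qed.

Lemma ext_cond d (X : tbLatticeType d) (hmod : modular_lattice X) (s : seq X)
  (f : X -> X) : join_independent s ->
  (forall x, x \in s -> essential_in x (f x)) ->
  forall t x, {subset t <= s} -> x \in s -> x \notin t ->
  (\join_(y <- t) f y) `&` f x = \bot.
Proof.
move=> ind ess t x sub xs xt.
have [_ ex] := ess x xs.
apply: ex; first exact: leIr.
have := @claimC _ _ hmod s f ind ess t [::] x sub (fun z (h : z \in [::]) => match notF h with end) xs xt isT (fun _ _ => isT).
rewrite big_nil joinx0 => h0.
apply/eqP; rewrite -lex0 -[leRHS]h0 lexI leIl andbT meetC.
exact: le_trans (leIl _ _) (leIl _ _).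
Qed.

Theorem theorem4p1 (d1 d2 : Order.disp_t)
  (A : tbLatticeType d1) (B : tbLatticeType d2)
  (alpha : A -> B) (beta : B -> A)
  (hA01 : (\bot : A) != \top) (hB01 : (\bot : B) != \top)
  (hAmod : modular_lattice A) (hBmod : modular_lattice B)
  (hgc : galois_connection alpha beta)
  (hret : gc_retractable alpha beta)
  (hbeta0 : beta \bot = \bot) :
  udim_le B A /\
  (gc_essential alpha beta -> udim_eq A B) /\
  (cyclically_generated A -> gc_cyclically_essential alpha beta ->
     beta_additive beta -> udim_eq A B).
Proof.
have bI := @betaI _ _ _ _ _ _ hgc.
have a0 := @alpha0 _ _ _ _ _ _ hgc.
have aJ := @alpha_join _ _ _ _ _ _ hgc.
have bJ := @beta_join_le _ _ _ _ _ _ hgc.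
have gU := @gc_unit _ _ _ _ _ _ hgc.
have Qof u x : beta (alpha u) `&` beta (alpha x) = \bot -> alpha u `&` alpha x = \bot.
  rewrite -bI => H; apply: ess0.
  by have := hret (alpha u `&` alpha x); rewrite H a0.
have alpha_nz a : a != \bot -> alpha a != \bot.
  apply: contra => /eqP h; rewrite -lex0 -hbeta0 -h; exact: gU.
have beta_nz b : b != \bot -> beta b != \bot.
  apply: contra => /eqP h; have := hret b; rewrite h a0 => /ess0 ->.
  by [].
have partI : udim_le B A.
  move=> k [s [ind sz]]; exists k; split => //; exists (map beta s).
  split; last by rewrite size_map.
  apply: map_indep => //.
    by move=> x xs; apply: beta_nz; case: ind => _ [] /(_ x xs).
  move=> t x tn sub xs xt; apply/eqP; rewrite -lex0.
  apply: le_trans (leI2 (bJ t) (lexx (beta x))) _.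
  by rewrite -bI; case: ind => _ [_ ->] //; rewrite hbeta0.
have toAB : (forall s : seq A, join_independent s ->
   exists s' : seq A, join_independent s' /\ size s' = size s /\
   forall t x, t != [::] -> {subset t <= s'} -> x \in s' -> x \notin t ->
     alpha (\join_(y <- t) y) `&` alpha x = \bot) -> udim_le A B.
  move=> H k [s [ind sz]]; exists k; split => //.
  have [s' [ind' [sz' c']]] := H s ind.
  exists (map alpha s'); split; last by rewrite size_map sz' sz.
  apply: map_indep => //.
    by move=> x xs; apply: alpha_nz; case: ind' => _ [] /(_ x xs).
  by move=> t x tn sub xs xt; rewrite -aJ; apply: c'.
split => //; split.
  move=> hess; split => //; apply: toAB => s ind; exists s; split => //; split => //.
  move=> t x tn sub xs xt; apply: Qof.
  case: ind => _ [_ ind]; apply: keyK (hess _) (hess _); exact: ind.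
move=> hcg hce hadd; split => //; apply: toAB => s ind.
have ex_c (a : A) : exists c, a != \bot -> [/\ cyclic_elt c, c != \bot & c <= a].
  case: (boolP (a == \bot)) => [ab|an]; first by exists a; rewrite ab.
  have [S [Sc [Sa Sl]]] := hcg a.
  apply: NNPP => hn.
  have : a <= \bot.
    apply: Sl => x Sx; rewrite lex0; apply: contraT => xn.
    by case: hn; exists x => _; split => //; [apply: Sc|apply: Sa].
  by rewrite lex0 (negbTE an).
pose g a := proj1_sig (constructive_indefinite_description _ (ex_c a)).
have gP a : a != \bot -> [/\ cyclic_elt (g a), g a != \bot & g a <= a].
  exact: (proj2_sig (constructive_indefinite_description _ (ex_c a))).
have snz x : x \in s -> x != \bot by case: ind => _ [] /(_ x).
have ind' : join_independent (map g s).
  apply: map_indep => //.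
    by move=> x xs; case: (gP x (snz x xs)).
  move=> t x tn sub xs xt; apply/eqP; rewrite -lex0.
  case: ind => _ [_ ind]; rewrite -[leRHS](ind t x tn sub xs xt).
  apply: leI2; last by case: (gP x (snz x xs)).
  apply/joinsP_seq => y yt _; apply: le_trans (_ : y <= _).
    by case: (gP y (snz y (sub y yt))).
  exact: (@join_ge _ _ _ (fun z => z) t y yt).
set c := map g s.
have essc y : y \in c -> essential_in y (beta (alpha y)).
  by move=> /mapP [a ha ->]; apply: hce; case: (gP a (snz a ha)).
have EC := @ext_cond _ _ hAmod c (fun y => beta (alpha y)) ind' essc.
have aU := @alphaU _ _ _ _ _ _ hgc.
have P : forall T, {subset T <= c} ->
    beta (alpha (\join_(y <- T) y)) = \join_(y <- T) beta (alpha y).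
  elim => [|y T IH] sub; first by rewrite !big_nil a0 hbeta0.
  have yc : y \in c by apply: sub; rewrite inE eqxx.
  have subT : {subset T <= c} by move=> z zT; apply: sub; rewrite inE zT orbT.
  rewrite !big_cons.
  case: (boolP (y \in T)) => yT.
    have /join_idPr -> := @join_ge _ _ _ (fun z => z) T y yT.
    have /join_idPr -> := @join_ge _ _ _ (fun z => beta (alpha z)) T y yT.
    exact: IH.
  rewrite aU hadd; first by rewrite IH.
  by rewrite meetC; apply: Qof; rewrite (IH subT); apply: EC.
exists c; split => //; split; first by rewrite size_map.
move=> t x tn sub xs xt; apply: Qof; rewrite P //; exact: EC.
Qed.
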